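(* Let $r \in \mathbb{Z}$ and let $P(r)=(P_{n,k})_{n,k\ge 0}$ be the Riordan array $\left(\frac{1+rx^2}{1+x^2}, \frac{x}{1+x^2}\right)$, i.e. $P_{n,k}=[x^n]\,\frac{1+rx^2}{1+x^2}\left(\frac{x}{1+x^2}\right)^k$. Then for all integers $n,k\ge 0$, $$P_{n,k}=\binom{\frac{n+k}{2}}{k}(-1)^{\frac{n-k}{2}}\frac{1+(-1)^{n-k}}{2}-r\binom{\frac{n+k-2}{2}}{k}(-1)^{\frac{n-k}{2}}\frac{1+(-1)^{n-k}}{2}+r\cdot 0^{n+k},$$ where any term carrying the factor $\frac{1+(-1)^{n-k}}{2}$ is interpreted as $0$ when $n-k$ is odd.
   Context: For a power series $h(x)$, $[x^n]h(x)$ denotes the coefficient of $x^n$. $0^m$ equals $1$ if $m=0$ and $0$ if $m>0$. For an integer $a$ and integer $k\ge 0$, $\binom{a}{k}=\frac{a(a-1)\cdots(a-k+1)}{k!}$ (so $\binom{-1}{0}=1$, and $\binom{a}{k}=0$ when $0\le a<k$). The Riordan array $(g(x),f(x))$ is the lower-triangular matrix with $(n,k)$ entry $[x^n]g(x)f(x)^k$. The matrix $P(r)$ is the coefficient array of the polynomials $P_n(x;r)=\sum_{k} P_{n,k}x^k$ (the restricted Chebyshev–Boubaker polynomials). *)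

(* Defs.v *)
From mathcomp Require Import all_boot all_order all_algebra.
Set Implicit Arguments. Unset Strict Implicit. Unset Printing Implicit Defensive.
Import Order.TTheory GRing.Theory Num.Theory.
Local Open Scope ring_scope.

Section FPS.
Variable R : comNzRingType.
Definition fps := nat -> R.

Definition fmul (a b : fps) : fps := fun n => \sum_(i < n.+1) a i * b (n - i)%N.
Definition fone : fps := fun n => (n == 0%N)%:R.
Definition fpow (a : fps) (k : nat) : fps := iter k (fmul a) fone.

(* Inverse of a series with constant term 1:
   b_0 = 1, b_n = - sum_{1<=i<=n} a_i b_{n-i}. inv_seq a n = [:: b_0; ...; b_n]. *)
Fixpoint inv_seq (a : fps) (n : nat) : seq R :=
  match n with
  | 0 => [:: 1]
  | m.+1 => let s := inv_seq a m in
            rcons s (- \sum_(1 <= i < m.+2) a i * nth 0 s (m.+1 - i)%N)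
  end.
Definition finv (a : fps) : fps := fun n => nth 0 (inv_seq a n) n.

Definition riordan (g f : fps) (n k : nat) : R := fmul g (fpow f k) n.
End FPS.

Definition one_x2 : fps int := fun n => (n == 0%N)%:R + (n == 2%N)%:R.
Definition one_rx2 (r : int) : fps int := fun n => (n == 0%N)%:R + r * (n == 2%N)%:R.
Definition xser : fps int := fun n => (n == 1%N)%:R.

Definition Pentry (r : int) (n k : nat) : int :=
  riordan (fmul (one_rx2 r) (finv one_x2)) (fmul xser (finv one_x2)) n k.

Definition gbinom (a : int) (k : nat) : rat :=
  (\prod_(i < k) (a%:~R - (i%:R : rat))) / (k`!)%:R.

(* Main.v *)
Require Import Defs.
From mathcomp Require Import all_boot all_order all_algebra.
From mathcomp Require Import zify ring lra.
Import Order.TTheory GRing.Theory Num.Theory.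
Local Open Scope ring_scope.

Lemma fmulC (a b : fps int) n : fmul a b n = fmul b a n.
Proof.
rewrite /fmul (reindex_inj rev_ord_inj) /=; apply: eq_bigr => i _.
rewrite mulrC subSS subKn //; exact: ltnSE (ltn_ord i).
Qed.

Lemma fmul1 (a : fps int) n : fmul a (fone int) n = a n.
Proof.
rewrite /fmul big_ord_recr /= subnn /fone eqxx mulr1 big1 ?add0r // => i _.
rewrite /= subn_eq0 leqNgt ltn_ord /= mulr0 //.
Qed.

Lemma lem1 (g s t : fps int) :
  (forall n, s n.+2 + s n = t n.+1) -> forall n,
  fmul g s n.+2 + fmul g s n = fmul g t n.+1 + g n.+1 * (s 1%N - t 0%N) + g n.+2 * s 0%N.
Proof.
move=> H n; rewrite /fmul [\sum_(i < n.+3) _]big_ord_recr [\sum_(i < n.+2) _ * s _]big_ord_recr [\sum_(i < n.+2) _ * t _]big_ord_recr /= subnn subSn // subnn.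
have -> : \sum_(i < n.+1) g i * s (n.+2 - i)%N = 
   \sum_(i < n.+1) g i * t (n.+1 - i)%N - \sum_(i < n.+1) g i * s (n - i)%N.
  rewrite -sumrB; apply: eq_bigr => i _.
  have hi : (i <= n)%N by exact: ltnSE (ltn_ord i).
  rewrite -mulrBr; congr (_ * _).
  have -> : (n.+2 - i = (n-i).+2)%N by lia.
  have -> : (n.+1 - i = (n-i).+1)%N by lia.
  by rewrite -H addrK.
ring.
Qed.

Definition cc (n : nat) : int := if odd n then 0 else (-1) ^+ n./2.

Lemma inv_seq_cc n : inv_seq one_x2 n = mkseq cc n.+1.
Proof.
elim: n => [|m IH] //=.
rewrite IH [mkseq cc m.+2]mkseqS; congr rcons.
case: m IH => [|m] IH.
  by rewrite big_nat1 /one_x2 /cc /=; lia.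
rewrite big_nat_recl // big_nat_recl // big1_seq ?addr0.
  rewrite /one_x2 /= mulr0n mulr1n add0r mul0r add0r mul1r nth_mkseq; last by lia.
  have -> : (m.+2 - 2 = m)%N by lia.
  rewrite /cc /=; case: (odd m) => /=; by rewrite ?oppr0 ?exprS ?mulN1r.
move=> [|i]; rewrite ?mem_iota //= => _.
by rewrite /one_x2 /= mulr0n addr0 mul0r.
Qed.

Definition c : nat -> int := Defs.finv one_x2.

Lemma c_cc n : c n = cc n.
Proof. by rewrite /c /Defs.finv inv_seq_cc nth_mkseq. Qed.

Lemma c0 : c 0%N = 1. Proof. by rewrite c_cc. Qed.
Lemma c1 : c 1%N = 0. Proof. by rewrite c_cc. Qed.
Lemma cSS n : c n.+2 + c n = 0.
Proof. rewrite !c_cc /cc /=; case: (odd n) => /=; first by rewrite addr0. by rewrite exprS mulN1r addNr. Qed.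

Lemma o0 r : one_rx2 r 0%N = 1. Proof. rewrite /one_rx2 /=. by rewrite mulr0 addr0. Qed.
Lemma o1 r : one_rx2 r 1%N = 0. Proof. rewrite /one_rx2 /=. by rewrite mulr0 addr0. Qed.
Lemma o2 r : one_rx2 r 2%N = r. Proof. rewrite /one_rx2 /=. by rewrite mulr1 add0r. Qed.
Lemma o3 r n : one_rx2 r n.+3 = 0. Proof. rewrite /one_rx2 /=. by rewrite mulr0 addr0. Qed.

Definition F : fps int := fmul xser c.
Definition G (r : int) : fps int := fmul (one_rx2 r) c.

Lemma F0 : F 0%N = 0.
Proof. by rewrite /F /fmul big_ord1 /xser /= mul0r. Qed.

Lemma FS n : F n.+1 = c n.
Proof.
rewrite /F /fmul big_ord_recl big_ord_recl /xser /= mul0r add0r mul1r subn1 /=.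
rewrite big1 ?addr0 // => i _; by rewrite /bump /= mul0r.
Qed.

Lemma FSS n : F n.+2 + F n = fone int n.+1.
Proof.
case: n => [|n]; first by rewrite FS F0 c1 addr0.
by rewrite !FS cSS.
Qed.

Lemma fmulF (t : fps int) n : fmul F t n.+2 + fmul F t n = t n.+1.
Proof.
rewrite !(fmulC F) (lem1 _ _ (fone int)); last exact: FSS.
by rewrite fmul1 F0 FS c0 /fone /= subrr mulr0 mulr0 !addr0.
Qed.

Lemma G0 r : G r 0%N = 1.
Proof. by rewrite /G /fmul big_ord1 /= subnn o0 c0 mulr1. Qed.

Lemma G1 r : G r 1%N = 0.
Proof. by rewrite /G /fmul !big_ord_recr big_ord0 /= subn0 subnn o0 o1 c0 c1 mulr0 mul0r !add0r. Qed.

Lemma GSS r n : G r n.+2 + G r n = r * (n == 0%N)%:R.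
Proof.
rewrite /G (lem1 _ _ (fun _ => 0)) /=; last first.
  by move=> m; rewrite cSS.
rewrite c0 c1 subrr mulr0 mulr1 addr0 /fmul big1 ?add0r; last by move=> i _; rewrite mulr0.
by case: n => [|n]; rewrite ?o2 ?o3 /= ?mulr1 ?mulr0.
Qed.

Definition T k : fps int := fpow F k.
Lemma TS k : T k.+1 = fmul F (T k). Proof. by []. Qed.
Lemma TS0 k : T k.+1 0%N = 0.
Proof. by rewrite TS /fmul big_ord1 F0 mul0r. Qed.
Lemma TS1 k : T k.+1 1%N = T k 0%N.
Proof. by rewrite TS /fmul !big_ord_recr big_ord0 /= F0 FS c0 mul0r add0r subnn mul1r. Qed.
Lemma TSS k n : T k.+1 n.+2 + T k.+1 n = T k n.+1.
Proof. by rewrite TS fmulF. Qed.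

Definition A r k : fps int := fmul (G r) (T k).
Lemma A0 r n : A r 0 n = G r n.
Proof. exact: fmul1. Qed.
Lemma AS0 r k : A r k.+1 0%N = 0.
Proof. by rewrite /A /fmul big_ord1 TS0 mulr0. Qed.
Lemma AS1 r k : A r k.+1 1%N = A r k 0%N.
Proof. by rewrite /A /fmul !big_ord_recr !big_ord0 /= -!TS subnn subn0 TS0 TS1 G0 G1 !mul1r mul0r !add0r addr0. Qed.
Lemma ASS r k n : A r k.+1 n.+2 + A r k.+1 n = A r k n.+1.
Proof.
rewrite /A (lem1 _ _ (T k)); last exact: TSS.
by rewrite TS1 TS0 subrr mulr0 mulr0 !addr0.
Qed.

Definition tm (r : int) k m : int := if m is m'.+1 then r * ('C(k + m', k))%:R else 0.
Definition E r k n : int :=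
  if odd (n + k) || (n < k)%N then 0
  else (-1) ^+ ((n - k)./2) * (('C(k + (n - k)./2, k))%:R - tm r k ((n - k)./2)).

Lemma Ek r k n m : n = (k + m.*2)%N -> E r k n = (-1) ^+ m * ('C(k + m, k)%:R - tm r k m).
Proof.
move=> ->; rewrite /E.
have -> : odd (k + m.*2 + k) = false by rewrite addnC addnA addnn oddD !odd_double.
have -> : (k + m.*2 < k)%N = false by rewrite ltnNge leq_addr.
by rewrite /= addKn doubleK.
Qed.

Lemma E0 r k n : odd (n + k) || (n < k)%N -> E r k n = 0.
Proof. by rewrite /E => ->. Qed.

Lemma decomp {n k} : ~~ odd (n + k) -> (k <= n)%N -> exists m, n = (k + m.*2)%N.
Proof.
move=> ho hk; exists (n - k)./2.
have := odd_double_half (n - k).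
rewrite oddB // -oddD (negbTE ho) add0n => ->.
by rewrite subnKC.
Qed.

Lemma R1 r k n : E r k.+1 n.+2 = E r k n.+1 - E r k.+1 n.
Proof.
case ho: (odd (n + k)); last first.
  by rewrite !E0 ?subrr //= ?addSn ?addnS /= ?ho.
case: (ltnP n.+1 k) => hk.
  by rewrite !E0 ?subrr //; apply/orP; right; lia.
have [m hm] : exists m, n.+1 = (k + m.*2)%N.
  apply: decomp => //; by rewrite addSn /= ho.
case: m hm => [|m] hm.
  rewrite (Ek r k.+1 n.+2 0); last by rewrite /=; lia.
  rewrite (Ek r k n.+1 0); last by [].
  rewrite (E0 r k.+1 n ); last by apply/orP; right; rewrite /= in hm; lia.
  by rewrite /= !addn0 !binn; ring.
rewrite (Ek r k.+1 n.+2 m.+1); last by rewrite !doubleS in hm *; lia.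
rewrite (Ek r k n.+1 m.+1); last by [].
rewrite (Ek r k.+1 n m); last by rewrite !doubleS in hm *; lia.
case: m {hm} => [|m].
  by rewrite /= !addn0 !addnS !addn0 binS !binn natrD; ring.
by rewrite /tm !addSn !addnS !binS !natrD !exprS; ring.
Qed.

Lemma R0 r n : E r 0 n.+2 = r * (n == 0%N)%:R - E r 0 n.
Proof.
case ho: (odd n).
  have -> : ((n == 0%N)%:R : int) = 0 by case: n ho.
  rewrite !E0 /= ?addn0 ?ho //; ring.
have [m hm] : exists m, n = (0 + m.*2)%N by apply: decomp; rewrite ?addn0 ?ho.
rewrite (Ek r 0 n.+2 m.+1); last by rewrite hm doubleS.
rewrite (Ek r 0 n m) //.
case: m hm => [|m] -> /=; rewrite /tm !bin0 ?exprS; ring.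
Qed.

Lemma E00 r : E r 0 0 = 1. Proof. by rewrite (Ek r 0 0 0). Qed.
Lemma E01 r : E r 0 1 = 0. Proof. by rewrite E0. Qed.
Lemma ES0 r k : E r k.+1 0 = 0. Proof. by rewrite E0 // orbT. Qed.
Lemma ES1 r k : E r k.+1 1 = E r k 0.
Proof.
case: k => [|k]; first by rewrite (Ek r 1 1 0) // E00.
by rewrite !E0 // ?orbT.
Qed.

Lemma AE r k n : A r k n = E r k n.
Proof.
elim: k n => [|k IH] n.
  suff H : forall n, A r 0 n = E r 0 n /\ A r 0 n.+1 = E r 0 n.+1 by case: (H n).
  elim=> [|m [h1 h2]]; first by rewrite !A0 G0 G1 E00 E01.
  split=> //; rewrite A0 R0 -h1 A0.
  by rewrite -(GSS r m) addrK.
suff H : forall n, A r k.+1 n = E r k.+1 n /\ A r k.+1 n.+1 = E r k.+1 n.+1 by case: (H n).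
elim=> [|m [h1 h2]]; first by rewrite AS0 AS1 ES0 ES1 IH.
split=> //; rewrite R1 -h1 -IH.
by rewrite -(ASS r k m) addrK.
Qed.

Lemma intr_natr (n : nat) : ((n%:R : int)%:~R : rat) = n%:R.
Proof. by rewrite mulrz_nat. Qed.

Lemma gbinom_nat (a k : nat) : gbinom a%:Z k = ('C(a, k))%:R.
Proof.
have H : \prod_(i < k) (((a%:Z)%:~R : rat) - i%:R) = (a ^_ k)%:R.
  elim: k => [|k IH]; first by rewrite big_ord0 ffactn0.
  rewrite big_ord_recr /= IH ffactnSr natrM.
  have -> : ((a%:Z)%:~R : rat) = a%:R by [].
  case: (leqP k a) => hk; first by rewrite natrB.
  by rewrite ffact_small // !mul0r.
rewrite /gbinom H -bin_ffact natrM mulfK //.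
by rewrite pnatr_eq0 -lt0n fact_gt0.
Qed.

Lemma gbinom0 (a : int) : gbinom a 0 = 1.
Proof. by rewrite /gbinom big_ord0 /= divr1. Qed.

Theorem mainTheorem1 (r : int) (n k : nat) :
  ((Pentry r n k)%:~R : rat) =
    (if odd (n + k) then 0
     else gbinom ((n + k)./2)%:Z k * (-1) ^+ (`|(n%:Z - k%:Z)|%N)./2)
    - (r%:~R : rat) *
      (if odd (n + k) then 0
       else gbinom (((n + k)./2)%:Z - 1) k * (-1) ^+ (`|(n%:Z - k%:Z)|%N)./2)
    + (r%:~R : rat) * (0 : rat) ^+ (n + k).
Proof.
have -> : Pentry r n k = A r k n by [].
rewrite AE.
case ho: (odd (n + k)).
  rewrite E0 ?ho // expr0n.
  have -> : (n + k == 0)%N = false by apply/eqP => hz; rewrite hz in ho.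
  rewrite /=; ring.
have hh := odd_double_half (n + k); rewrite ho add0n in hh.
set h := (n + k)./2 in hh *.
case: (ltnP n k) => hnk.
  rewrite E0 ?hnk ?orbT //.
  have h1 : (1 <= h)%N by lia.
  have -> : (h%:Z - 1) = (h - 1)%N%:Z by rewrite subzn.
  rewrite !gbinom_nat !bin_small; [|lia|lia].
  rewrite expr0n; have -> : (n + k == 0)%N = false by lia.
  rewrite /=; ring.
have [m hm] := decomp (negbT ho) hnk.
rewrite (Ek r k n m) //.
have eh : h = (k + m)%N by rewrite hm in hh; lia.
have ea : (`|(n%:Z - k%:Z)|%N)./2 = m.
  by rewrite distnEl // hm addKn doubleK.
rewrite ea eh !gbinom_nat.
rewrite !(rmorphM, rmorphB, rmorphN, rmorph1, rmorphXn) /= !intr_natr.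
clear ea eh hh h.
case: m hm => [|m] hm.
  case: k hnk ho hm => [|k] hnk ho hm.
    rewrite hm /= gbinom0 ?expr0n /= ?mulr0z; ring.
  have -> : ((k.+1 + 0)%N%:Z - 1 = k%:Z) by rewrite addn0 subzSS subr0.
  rewrite gbinom_nat (bin_small (ltnSn k)) hm expr0n.
  have -> : (k.+1 + 0.*2 + k.+1 == 0)%N = false by lia.
  rewrite /= ?mulr0z; ring.
have -> : ((k + m.+1)%N%:Z - 1 = (k + m)%N%:Z) by rewrite addnS subzSS subr0.
rewrite gbinom_nat expr0n /= rmorphM /= intr_natr.
have -> : (n + k == 0)%N = false by lia.
rewrite /=; ring.
Qed.
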